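(* Let $N$ be a finite nonempty set, $p\notin N$ and $N'=N\cup\{p\}$. Let $\mathscr{C}=\{S_1,\dots,S_k\}$ be a minimal balanced collection on $N$ with (unique) balancing weights $(\lambda_{S_i})_{i\in[k]}$. Let $I\subseteq[k]$ and $\delta\in[k]\setminus I$ satisfy $1>\lambda_I>1-\lambda_{S_\delta}$, where $\lambda_I=\sum_{i\in I}\lambda_{S_i}$. Then $$\mathscr{C}'=\{S_i\cup\{p\}\mid i\in I\}\cup\{S_i\mid i\in[k]\setminus I\}\cup\{S_\delta\cup\{p\}\}$$ is a minimal balanced collection on $N'$ (with balancing weights $\lambda_{S_i}$ for the sets coming from $S_i$, $i\neq\delta$, weight $1-\lambda_I$ for $S_\delta\cup\{p\}$ and weight $\lambda_{S_\delta}-(1-\lambda_I)$ for $S_\delta$).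
   Context: For $T\subseteq N$, $\mathbf{1}^T\in\mathbb{R}^N$ denotes the characteristic vector of $T$. A collection $\mathscr{B}$ of nonempty subsets of a finite set $N$ is balanced if there exist positive weights $(\lambda_S)_{S\in\mathscr{B}}$ (balancing weights) with $\sum_{S\in\mathscr{B}}\lambda_S\mathbf{1}^S=\mathbf{1}^N$. A balanced collection is minimal if it contains no balanced proper subcollection; equivalently, its system of balancing weights is unique. $[k]=\{1,\dots,k\}$. *)

(* Defs.v *)
From HB Require Import structures.
From mathcomp Require Import all_boot all_order all_algebra.
Set Implicit Arguments. Unset Strict Implicit. Unset Printing Implicit Defensive.
Import Order.TTheory GRing.Theory Num.Theory.
Local Open Scope ring_scope.

Definition charvec (R : realFieldType) (T : finType) (S : {set T}) : {ffun T -> R^o} :=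
  [ffun x => (x \in S)%:R].

Definition balanced (R : realFieldType) (T : finType) (N : {set T})
    (B : {set {set T}}) : Prop :=
  (forall S, S \in B -> S != set0 /\ S \subset N) /\
  exists lam : {set T} -> R,
    (forall S, S \in B -> 0 < lam S) /\
    \sum_(S in B) lam S *: charvec R S = charvec R N.

Definition minimal_balanced (R : realFieldType) (T : finType) (N : {set T})
    (B : {set {set T}}) : Prop :=
  balanced R N B /\ forall B' : {set {set T}}, B' \proper B -> ~ balanced R N B'.

(* Main.v *)
Require Import Defs.
From HB Require Import structures.
From mathcomp Require Import all_boot all_order all_algebra.
From mathcomp Require Import ring lra.
Import Order.TTheory GRing.Theory Num.Theory.
Local Open Scope ring_scope.

Section Helpers.
Variables (R : realFieldType) (T : finType).

Lemma cvE (S : {set T}) x : charvec R S x = (x \in S)%:R.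
Proof. by rewrite ffunE. Qed.

Lemma sumcvE (J : finType) (P : pred J) (c : J -> R) (F : J -> {set T}) x :
  (\sum_(j | P j) c j *: charvec R (F j)) x = \sum_(j | P j) c j * (x \in F j)%:R.
Proof. by rewrite sum_ffunE; apply: eq_bigr => j _; rewrite !ffunE. Qed.

Lemma bal_index (N : {set T}) (J : finType) (F : J -> {set T}) (A : {pred J}) (c : J -> R) :
  (forall j, j \in A -> F j != set0 /\ F j \subset N) -> (forall j, j \in A -> 0 < c j) ->
  \sum_(j in A) c j *: charvec R (F j) = charvec R N -> balanced R N [set F j | j in A].
Proof.
move=> HF Hc Hs; split.
  by move=> X /imsetP [j jA ->]; exact: HF.
exists (fun X => \sum_(j in A | F j == X) c j); split.
  move=> X /imsetP [j jA ->]; rewrite (bigD1 j) /= ?jA ?eqxx //.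
  apply: (lt_le_trans (Hc j jA)); rewrite lerDl.
  apply: sumr_ge0 => l Hl; apply: ltW; apply: Hc; by move: Hl => /andP [/andP [lA _] _].
rewrite -Hs (partition_big_imset F); apply: eq_bigr => X _.
by rewrite scaler_suml; apply: eq_bigr => j /andP[_ /eqP->].
Qed.

Lemma bal_sub (N : {set T}) (J : finType) (F : J -> {set T}) (A : {pred J}) (B' : {set {set T}}) :
  {in A &, injective F} -> balanced R N B' -> B' \subset [set F j | j in A] ->
  exists w : J -> R, (forall j, 0 <= w j) /\ (forall j, j \in A -> 0 < w j -> F j \in B')
   /\ (forall j, j \notin A -> w j = 0) /\ \sum_j w j *: charvec R (F j) = charvec R N.
Proof.
move=> inj [_ [mu [Hmu Hs]]] Hsub.
exists (fun j => if (j \in A) && (F j \in B') then mu (F j) else 0); split; last split; last split.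
- by move=> j; case: ifP => [/andP[_ h]|_ //]; apply: ltW; apply: Hmu.
- by move=> j jA; rewrite jA /=; case: ifP => //; rewrite ltxx.
- by move=> j /negbTE ->.
pose A' := [set j | (j \in A) && (F j \in B')].
have HB : B' = [set F j | j in A'].
  apply/setP => X; apply/idP/imsetP.
    move=> XB; have /imsetP [j jA eX] := subsetP Hsub X XB.
    by exists j => //; rewrite inE jA -eX XB.
  by move=> [j]; rewrite inE => /andP[_ h] ->.
have inj' : {in A' &, injective F}.
  by move=> i j; rewrite !inE => /andP[iA _] /andP[jA _]; apply: inj.
rewrite -Hs.
have -> : \sum_(S in B') mu S *: charvec R S = \sum_(S in [set F x | x in A']) mu S *: charvec R S by rewrite -HB.
rewrite (big_imset _ inj') /= [RHS]big_mkcond /=.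
by apply: eq_bigr => j _; rewrite inE; case: ifP => // _; rewrite scale0r.
Qed.


Lemma ptw (N : {set T}) (J : finType) (P : pred J) (c : J -> R) (F : J -> {set T}) :
  \sum_(j | P j) c j *: charvec R (F j) = charvec R N ->
  forall x, \sum_(j | P j) c j * (x \in F j)%:R = (x \in N)%:R.
Proof. by move=> /ffunP H x; have := H x; rewrite sumcvE cvE. Qed.

Arguments ptw {N J P c F}.

Lemma zero_w (N : {set T}) k (S : 'I_k -> {set T}) (u : 'I_k -> R) i0 :
  injective S -> minimal_balanced R N [set S i | i : 'I_k] ->
  (forall i, 0 <= u i) -> \sum_i u i *: charvec R (S i) = charvec R N -> u i0 = 0 -> False.
Proof.
move=> inj [[HC _] Hmin] Hu Hs H0.
have Hb : balanced R N [set S i | i in [set i | 0 < u i]].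
  apply: (@bal_index N _ S _ u).
  - by move=> j _; apply: HC; apply: imset_f.
  - by move=> j; rewrite inE.
  rewrite -Hs [RHS](bigID (fun i => 0 < u i)) /= [X in _ = _ + X]big1 ?addr0.
    by apply: eq_bigl => i; rewrite inE.
  move=> i; have := Hu i; rewrite le_eqVlt => /orP[/eqP <- _|->//]; by rewrite scale0r.
apply: (Hmin _ _ Hb); apply/properP; split.
  by apply/subsetP => X /imsetP [j _ ->]; apply: imset_f.
exists (S i0); first by apply: imset_f.
by apply/imsetP => [[j]]; rewrite inE => Hj /inj E; move: Hj; rewrite -E H0 ltxx.
Qed.

Lemma uniq_w (N : {set T}) k (S : 'I_k -> {set T}) (lam w : 'I_k -> R) :
  injective S -> minimal_balanced R N [set S i | i : 'I_k] -> (forall i, 0 < lam i) ->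
  \sum_i lam i *: charvec R (S i) = charvec R N ->
  (forall i, 0 <= w i) -> \sum_i w i *: charvec R (S i) = charvec R N -> forall i, w i = lam i.
Proof.
move=> inj Hm Hl Hls Hw Hws i.
have wpos j : 0 < w j.
  rewrite lt_def Hw andbT; apply/eqP => h; exact: (@zero_w N k S w j inj Hm Hw Hws h).
case: (@arg_minP _ _ _ i xpredT (fun j => w j / lam j) isT) => i1 _ Hi1.
set s := w i1 / lam i1 in Hi1.
have Hws' := ptw Hws; have Hls' := ptw Hls.
have sle j : s * lam j <= w j by rewrite -ler_pdivlMr //; apply: Hi1.
case: (ltP s 1) => hs.
  exfalso.
  pose u j := (w j - s * lam j) / (1 - s).
  apply: (@zero_w N k S u i1 inj Hm).
  - by move=> j; rewrite /u divr_ge0 // subr_ge0 ?sle // ltW.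
  - apply/ffunP => x; rewrite sumcvE cvE.
    transitivity ((\sum_j w j * (x \in S j)%:R - s * \sum_j lam j * (x \in S j)%:R) / (1 - s)).
      rewrite mulr_sumr -sumrB mulr_suml; apply: eq_bigr => j _; rewrite /u.
      ring.
    rewrite Hws' Hls'; have : 1 - s != 0 by rewrite subr_eq0 eq_sym lt_eqF.
    by move=> h; field.
  - rewrite /u /s divfK ?subrr ?mul0r //; exact: lt0r_neq0.
have ge j : lam j <= w j.
  apply: (le_trans _ (sle j)); rewrite -[X in X <= _]mul1r; apply: ler_wpM2r => //; exact: ltW.
have [[HC _] _] := Hm.
have [x xS] : exists x, x \in S i by apply/set0Pn; case: (HC (S i)) => //; apply: imset_f.
have H0 : \sum_j (w j - lam j) * (x \in S j)%:R = 0.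
  by rewrite (eq_bigr (fun j => w j * (x \in S j)%:R - lam j * (x \in S j)%:R)) ?sumrB ?Hws' ?Hls' ?subrr // => j _; rewrite mulrBl.
have := @psumr_eq0P _ _ xpredT _ _ H0 i isT; rewrite xS mulr1 => [/(_ _)/eqP]; rewrite subr_eq0 => /(_ _)/eqP; apply.
by move=> j _; rewrite mulr_ge0 ?subr_ge0.
Qed.

End Helpers.
Arguments ptw {R T N J P c F}.
Lemma scE (R : realFieldType) (a b : R) : a *: (b : R^o) = a * b.
Proof. by []. Qed.
Lemma sum_pair (V : nmodType) (K : finType) (G : K * bool -> V) :
  \sum_j G j = \sum_i (G (i, true) + G (i, false)).
Proof.
rewrite (eq_bigr (fun j => G (j.1, j.2))); last by case.
rewrite -(pair_bigA _ (fun i b => G (i, b))) /=.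
by apply: eq_bigr => i _; rewrite big_bool.
Qed.

Theorem lemma4p3 (R : realFieldType) (T : finType) (N : {set T}) (p : T)
  (k : nat) (S : 'I_k -> {set T}) (lam : 'I_k -> R) (I : {set 'I_k}) (delta : 'I_k) :
  N != set0 -> p \notin N ->
  injective S ->
  minimal_balanced R N [set S i | i : 'I_k] ->
  (forall i, 0 < lam i) ->
  \sum_(i < k) lam i *: charvec R (S i) = charvec R N ->
  delta \notin I ->
  \sum_(i in I) lam i < 1 ->
  1 - lam delta < \sum_(i in I) lam i ->
  minimal_balanced R (p |: N)
    ([set p |: S i | i in I] :|: [set S i | i in ~: I] :|: [set p |: S delta])
  /\ \sum_(i in I) lam i *: charvec R (p |: S i)
     + \sum_(i in ~: I | i != delta) lam i *: charvec R (S i)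
     + (1 - \sum_(i in I) lam i) *: charvec R (p |: S delta)
     + (lam delta - (1 - \sum_(i in I) lam i)) *: charvec R (S delta)
     = charvec R (p |: N).
Proof.
move=> HN pN inj Hm Hl Hls dI hI1 hI2.
set lI := \sum_(i in I) lam i in hI1 hI2 *.
have [[HC _] Hmin] := Hm.
have Ssub i : S i \subset N by case: (HC (S i)) => //; apply: imset_f.
have Sne i : S i != set0 by case: (HC (S i)) => //; apply: imset_f.
have pS i : p \notin S i by apply: contra pN; apply: (subsetP (Ssub i)).
have Hls' := ptw Hls.
have Hsplit x : \sum_(i < k) lam i * (x \in S i)%:R =
   \sum_(i in I) lam i * (x \in S i)%:R + \sum_(i in ~: I | i != delta) lam i * (x \in S i)%:R
   + lam delta * (x \in S delta)%:R.
  rewrite (bigID (fun i => i \in I)) /= -addrA; congr (_ + _).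
  rewrite (bigD1 delta) //= addrC; congr (_ + _).
  by apply: eq_bigl => i; rewrite inE.
have Heq : \sum_(i in I) lam i *: charvec R (p |: S i)
     + \sum_(i in ~: I | i != delta) lam i *: charvec R (S i)
     + (1 - lI) *: charvec R (p |: S delta)
     + (lam delta - (1 - lI)) *: charvec R (S delta)
     = charvec R (p |: N).
  apply/ffunP => x; rewrite !ffunE !sumcvE.
  case: (eqVneq x p) => [->|xp].
    rewrite !in_setU1 eqxx /= (negbTE (pS delta)).
    under eq_bigr do rewrite in_setU1 eqxx /= mulr1.
    under [X in _ + X + _ + _ = _]eq_bigr do rewrite (negbTE (pS _)) mulr0.
    by rewrite big1_eq -/lI /= !scE; lra.
  under eq_bigr do rewrite in_setU1 (negbTE xp) /=.
  rewrite !in_setU1 (negbTE xp) /= !scE -Hls' Hsplit; ring.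
split; last exact: Heq.
pose f (j : 'I_k * bool) := if j.2 then p |: S j.1 else S j.1.
pose P := [set j : 'I_k * bool | if j.2 then (j.1 \in I) || (j.1 == delta) else j.1 \notin I].
pose c (j : 'I_k * bool) := if j.2 then (if j.1 == delta then 1 - lI else lam j.1)
   else (if j.1 == delta then lam delta - (1 - lI) else lam j.1).
have finj : injective f.
  move=> [i [|]] [j [|]]; rewrite /f /= => E.
  - have : S i = S j by rewrite -(setU1K (pS i)) E setU1K.
    by move/inj->.
  - by move: (pS j); rewrite -E setU11.
  - by move: (pS i); rewrite E setU11.
  - by move/inj: E => ->.
have HC' : [set p |: S i | i in I] :|: [set S i | i in ~: I] :|: [set p |: S delta] = f @: P.
  apply/setP => X; rewrite !inE; apply/idP/imsetP.
  - case/orP => [/orP[]|/eqP->].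
    + by case/imsetP => i iI ->; exists (i, true) => //; rewrite inE /= iI.
    + by case/imsetP => i iI ->; exists (i, false) => //; rewrite inE /= -in_setC.
    + by exists (delta, true) => //; rewrite inE /= eqxx orbT.
  - move=> [[i [|]]]; rewrite inE /f /= => Hi ->.
    + case/orP: Hi => [iI|/eqP->]; last by rewrite eqxx orbT.
      by apply/orP; left; apply/orP; left; apply/imsetP; exists i.
    + by apply/orP; left; apply/orP; right; apply/imsetP; exists i; rewrite ?inE.
have Hbal : balanced R (p |: N) (f @: P).
  apply: (@bal_index _ _ (p |: N) _ f P c).
  - move=> [i [|]] _; rewrite /f /=; split.
    + by apply/set0Pn; exists p; exact: setU11.
    + by apply: setUS.
    + exact: Sne.
    + by apply: subset_trans (Ssub i) _; apply: subsetUr.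
  - move=> [i [|]]; rewrite inE /c /=; have := Hl i; case: eqP => [->|_]; move=> *; lra.
  - rewrite -Heq big_mkcond sum_pair big_split /=.
    rewrite [X in X + _](bigD1 delta) ?inE ?eqxx ?orbT //= [X in _ + X](bigD1 delta) ?inE //=.
    rewrite /c /f /= eqxx dI.
    have EA : \sum_(i < k | i != delta)
     (if (i, true) \in P then (if i == delta then 1 - lI else lam i) *: charvec R (p |: S i) else 0)
      = \sum_(i in I) lam i *: charvec R (p |: S i).
      rewrite big_mkcond [RHS]big_mkcond; apply: eq_bigr => i _; rewrite inE /=.
      case: (eqVneq i delta) => [->|nd] /=; first by rewrite (negbTE dI).
      by rewrite orbF; case: (i \in I).
    have EB : \sum_(i < k | i != delta)
      (if (i, false) \in P then (if i == delta then lam delta - (1 - lI) else lam i) *: charvec R (S i) else 0)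
      = \sum_(i in ~: I | i != delta) lam i *: charvec R (S i).
      rewrite big_mkcond [RHS]big_mkcond; apply: eq_bigr => i _; rewrite !inE /=.
      case: (eqVneq i delta) => [->|nd] /=; first by rewrite andbF.
      by rewrite andbT.
    rewrite EA EB -!addrA addrCA; congr (_ + _).
    by rewrite [RHS]addrC addrA.
rewrite HC'; split; first exact: Hbal.
move=> B' HB' Hb'.
case/properP: (HB') => Hsub [X XC XnB].
have [w [w0 [wpos [wout wsum]]]] := @bal_sub _ _ (p |: N) _ f P B' (in2W finj) Hb' Hsub.
have wsum' := ptw wsum.
have Hv : forall i, w (i, true) + w (i, false) = lam i.
  apply: (@uniq_w R T N k S lam (fun i => w (i, true) + w (i, false)) inj Hm Hl Hls).
    by move=> i; rewrite addr_ge0.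
  apply/ffunP => x; rewrite sumcvE cvE.
  case: (eqVneq x p) => [->|xp].
    by rewrite (negbTE pN) big1 // => i _; rewrite (negbTE (pS i)) mulr0.
  have := wsum' x; rewrite sum_pair /f /= in_setU1 (negbTE xp) /= => <-.
  by apply: eq_bigr => i _; rewrite in_setU1 (negbTE xp) /=; ring.
have Hp := wsum' p; rewrite sum_pair setU11 in Hp.
have Hp' : \sum_i w (i, true) = 1.
  rewrite -(mulr1n (1 : R)) -Hp; apply: eq_bigr => i _; rewrite /f /= setU11 (negbTE (pS _)) mulr1 mulr0 addr0 //.
have wIf i : i \in I -> w (i, false) = 0.
  by move=> iI; apply: wout; rewrite inE /= iI.
have wt i : i \notin I -> i != delta -> w (i, true) = 0.
  by move=> iI nd; apply: wout; rewrite inE /= negb_or iI nd.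
have Hsum1 : \sum_i w (i, true) = lI + w (delta, true).
  rewrite (bigID (fun i => i \in I)) /= [X in _ + X](bigD1 delta) //= [X in _ + (_ + X)]big1 ?addr0.
    congr (_ + _); rewrite /lI; apply: eq_bigr => i iI; rewrite -(Hv i) wIf ?addr0 //.
  by move=> i /andP[iI nd]; apply: wt.
have wdt : w (delta, true) = 1 - lI by lra.
have wdf : w (delta, false) = lam delta - (1 - lI) by have := Hv delta; lra.
move/imsetP: XC => [j jP EX]; apply: (negP XnB); rewrite EX; apply: wpos => //.
case: j jP {EX} => i [|]; rewrite inE /=.
- case/orP => [iI|/eqP->]; last by rewrite wdt; lra.
  by have := Hv i; rewrite wIf // addr0 => ->.
- move=> iI; case: (eqVneq i delta) => [->|nd]; first by rewrite wdf; lra.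
  by have := Hv i; rewrite wt // add0r => ->.
Qed.
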